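(* The dynamic quantum B+ tree storing $N$ key-record pairs with branching factor $B$ answers a dynamic quantum range query $QUERY(x,y)$ in $O(\log_B^2 N)$ expected time.
   Context: Dynamic quantum range query: for the current dataset $D$ (which supports insertions and deletions) and integers $x\le y$, output $\frac{1}{\sqrt{k}}\sum_{i=0}^{k-1}\lvert key_{l_i}\rangle\lvert rec_{l_i}\rangle$ over the $k$ pairs of $D$ with key in $[x,y]$. Model: QRAM store/load operations (including loading a superposition of addresses), quantum oracles, Hadamard gates, measurements and classical node accesses each cost $O(1)$. Structure: the dynamic quantum B+ tree consists of forests $F_0,\dots,F_{L-1}$, $L=\lfloor\log_BN\rfloor+1$, with $F_i$ holding at most $B-1$ quantum B+ trees of height $i$; each quantum B+ tree is a weight-balanced B+ tree (branching factor $B$ a power of 2, $B\ge4$; slots may be $dummy$; routing keys; leaves at equal level; non-root nodes of height $h$ have between $\frac14B^{h+1}$ and $B^{h+1}$ non-dummy pairs beneath; root has at least two non-dummy children) mirrored in QRAMs $\mathcal{Q}_0$ (child IDs at address $iB+j$) and $\mathcal{Q}_1$ (routing keys or key-record pairs at address $iB+j$). Query algorithm: for every tree root in every forest, run the global classical search (starting from the root, classify nodes as outside/inside/partial w.r.t. $[x,y]$; return the current list as soon as it contains a precise partial node, i.e. a leaf or a node with an inside child; otherwise replace each node by its non-outside children), collecting candidate nodes $u_0,\dots,u_{m-1}$. Then prepare $\sum_{i}\sqrt{B^{h(u_i)+1}/\sum_j B^{h(u_j)+1}}\,\lvert u_i\rangle$ ($h$ = height), descend to the key-record slots by repeatedly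 applying Hadamard gates on $\log_2B$ fresh qubits and $\mathcal{Q}_0$, then $\mathcal{Q}_1$, and post-select on the key lying in $[x,y]$, repeating until success. *)

(* Defs.v *)
From Stdlib Require Export Permutation.
From mathcomp Require Export all_boot all_order all_algebra.
Set Implicit Arguments. Unset Strict Implicit. Unset Printing Implicit Defensive.
Import Order.TTheory GRing.Theory Num.Theory.

(* A node of a quantum B+ tree: a list of slots, [None] = dummy.
   Leaf slots hold key-record pairs; internal slots hold
   (routing key, child).  The routing key of slot j is the lower bound of
   the key range of child j; child j covers [r_j, r_{j'}) where j' is the
   next non-dummy slot (or the parent's upper bound for the last child). *)
Inductive qbt (R : Type) : Type :=
| QLeaf of seq (option (int * R))
| QNode of seq (option (int * qbt R)).

(* bounds: [None] = -oo as lower bound, +oo as upper bound; ranges are [lo,hi) *)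
Definition lo_le (lo : option int) (k : int) : bool :=
  if lo is Some l then (l <= k)%R else true.
Definition lt_hi (k : int) (hi : option int) : bool :=
  if hi is Some h then (k < h)%R else true.
Definition in_rng (lo hi : option int) (k : int) : bool := lo_le lo k && lt_hi k hi.

Definition in_query {R : Type} (x y : int) (p : int * R) : bool :=
  (x <= p.1)%R && (p.1 <= y)%R.

Fixpoint tpairs {R : Type} (t : qbt R) : seq (int * R) :=
  match t with
  | QLeaf s => pmap id s
  | QNode s =>
    (fix go (s : seq (option (int * qbt R))) : seq (int * R) :=
       match s with
       | [::] => [::]
       | None :: s' => go s'
       | Some (_, c) :: s' => tpairs c ++ go s'
       end) s
  end.

Fixpoint theight {R : Type} (t : qbt R) : nat :=
  match t with
  | QLeaf _ => 0
  | QNode s =>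
    (fix go (s : seq (option (int * qbt R))) : nat :=
       match s with
       | [::] => 0
       | None :: s' => go s'
       | Some (_, c) :: s' => maxn (theight c).+1 (go s')
       end) s
  end.

Definition rkeys {T : Type} (s : seq (option (int * T))) : seq int :=
  [seq p.1 | p <- pmap id s].

Definition next_key {T : Type} (hi : option int) (s : seq (option (int * T))) :=
  if rkeys s is r :: _ then Some r else hi.

Fixpoint child_ranges {R : Type} (hi : option int) (s : seq (option (int * qbt R)))
  : seq (qbt R * option int * option int) :=
  match s with
  | [::] => [::]
  | None :: s' => child_ranges hi s'
  | Some (r, c) :: s' => (c, Some r, next_key hi s') :: child_ranges hi s'
  end.

Fixpoint wf_sub {R : Type} (B h : nat) (lo hi : option int) (t : qbt R) {struct t} : bool :=
  [&& (B ^ h.+1 <= 4 * size (tpairs t))%N, (size (tpairs t) <= B ^ h.+1)%N &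
  match t with
  | QLeaf s => [&& h == 0, size s == B &
                  all (fun o => if o is Some p then in_rng lo hi p.1 else true) s]
  | QNode s =>
    [&& (0 < h)%N, size s == B, sorted (fun a b : int => (a < b)%R) (rkeys s),
        all (in_rng lo hi) (rkeys s) &
    (fix go (s : seq (option (int * qbt R))) : bool :=
       match s with
       | [::] => true
       | None :: s' => go s'
       | Some (r, c) :: s' => wf_sub B h.-1 (Some r) (next_key hi s') c && go s'
       end) s]
  end].

Definition wf_root {R : Type} (B h : nat) (t : qbt R) : bool :=
  match t with
  | QLeaf s => (h == 0) && (size s == B)
  | QNode s =>
    [&& (0 < h)%N, size s == B, (2 <= size (pmap id s))%N,
        sorted (fun a b : int => (a < b)%R) (rkeys s) &
        all (fun e => wf_sub B h.-1 e.1.2 e.2 e.1.1) (child_ranges None s)]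
  end.

(* forests F_0 .. F_{L-1}; F_i is a list of trees of height i *)
Definition dataset {R : Type} (F : seq (seq (qbt R))) : seq (int * R) :=
  flatten [seq flatten (map tpairs f) | f <- F].

Definition dqbt_wf {R : Type} (B N : nat) (F : seq (seq (qbt R))) : bool :=
  [&& size F == (trunc_log B N).+1, size (dataset F) == N &
      all (fun i => (size (nth [::] F i) <= B.-1)%N && all (wf_root B i) (nth [::] F i))
          (iota 0 (size F))].

Definition elt (R : Type) := (qbt R * option int * option int)%type.

Definition outside (x y : int) (lo hi : option int) : bool :=
  (if hi is Some h then (h <= x)%R else false) || (if lo is Some l then (y < l)%R else false).
Definition inside (x y : int) (lo hi : option int) : bool :=
  (if lo is Some l then (x <= l)%R else false) && (if hi is Some h then (h <= y + 1)%R else false).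

Definition children {R : Type} (x y : int) (e : elt R) : seq (elt R) :=
  match e.1.1 with
  | QLeaf _ => [::]
  | QNode s => [seq c <- child_ranges e.2 s | ~~ outside x y c.1.2 c.2]
  end.

Definition precise {R : Type} (x y : int) (e : elt R) : bool :=
  match e.1.1 with
  | QLeaf _ => true
  | QNode s => has (fun c => inside x y c.1.2 c.2) (child_ranges e.2 s)
  end.

(* returns (final list, number of classical node accesses) *)
Fixpoint gsearch {R : Type} (x y : int) (fuel : nat) (L : seq (elt R)) : seq (elt R) * nat :=
  if has (precise x y) L then (L, size L) else
  match fuel with
  | 0 => (L, size L)
  | n.+1 => let r := gsearch x y n (flatten (map (children x y) L)) in (r.1, size L + r.2)
  end.

Definition searches {R : Type} (x y : int) (F : seq (seq (qbt R))) : seq (seq (elt R) * nat) :=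
  flatten [seq [seq gsearch x y i [:: (t, None, None)] | t <- nth [::] F i]
          | i <- iota 0 (size F)].

Definition candidates {R : Type} x y (F : seq (seq (qbt R))) : seq (elt R) :=
  flatten (map fst (searches x y F)).

Definition search_cost {R : Type} x y (F : seq (seq (qbt R))) : nat :=
  sumn (map snd (searches x y F)).

Definition answer {R : Type} x y (F : seq (seq (qbt R))) : seq (int * R) :=
  flatten [seq filter (in_query x y) (tpairs c.1.1) | c <- candidates x y F].

(* normalisation of the prepared state: sum_i B^(h(u_i)+1) *)
Definition prep_weight {R : Type} (B : nat) x y (F : seq (seq (qbt R))) : nat :=
  sumn [seq B ^ (theight c.1.1).+1 | c <- candidates x y F].

(* cost of one trial: state preparation over the m candidates, then for each
   of the (hmax+1) levels log2 B Hadamard gates and one QRAM load, then the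
   measurement/post-selection *)
Definition trial_cost {R : Type} (B : nat) x y (F : seq (seq (qbt R))) : nat :=
  size (candidates x y F)
  + (\max_(c <- candidates x y F) theight c.1.1).+1 * (trunc_log 2 B + 1) + 1.

(* success probability of one trial = size (answer) / prep_weight; the number
   of trials is geometric, with expectation prep_weight / size (answer). *)
Definition expected_time {R : Type} (B : nat) x y (F : seq (seq (qbt R))) : rat :=
  ((search_cost x y F)%:R
   + (trial_cost B x y F)%:R * (prep_weight B x y F)%:R / (size (answer x y F))%:R)%R.

(* Main.v *)
Require Import Defs.
From mathcomp Require Import all_boot all_order all_algebra.
From mathcomp Require Import zify.
Import Order.TTheory GRing.Theory Num.Theory.
Set Implicit Arguments. Unset Strict Implicit. Unset Printing Implicit Defensive.

Arguments rkeys {T} s : simpl never.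
Arguments next_key {T} hi s : simpl never.

Lemma all_flatten' {T} (a : pred T) ss : all a (flatten ss) = all (all a) ss.
Proof. by elim: ss => //= s ss IH; rewrite all_cat IH. Qed.

Lemma all_filterW {T} (a p : pred T) s : all a s -> all a (filter p s).
Proof. by elim: s => //= z s IH /andP[Ha Hs]; case: ifP => /= _; rewrite ?Ha IH. Qed.

Lemma filter_nil_all {T} (a b : pred T) s : all b s -> (forall p, b p -> ~~ a p) -> filter a s = [::].
Proof. elim: s => //= p s IH /andP[Hb Hs] H. by rewrite (negbTE (H p Hb)) IH. Qed.

Lemma rkeys_none {T} (s : seq (option (int*T))) : rkeys (None :: s) = rkeys s.
Proof. by []. Qed.
Lemma rkeys_some {T} r (c:T) s : rkeys (Some (r,c) :: s) = r :: rkeys s.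
Proof. by []. Qed.

Lemma tpairs_node {R} (hi : option int) (s : seq (option (int * qbt R))) :
  tpairs (QNode s) = flatten [seq tpairs c.1.1 | c <- child_ranges hi s].
Proof. elim: s => [|[[r c]|] s IH] //=. by rewrite -IH. Qed.

Lemma theight_node {R} hi (s : seq (option (int * qbt R))) h :
  all (fun c => theight c.1.1 < h) (child_ranges hi s) -> theight (QNode s) <= h.
Proof.
elim: s => [|[[r c]|] s IH] //=. move=> /andP[H1 H2]. rewrite geq_max H1. exact: IH H2.
Qed.

Lemma wf_sub_node {R} B h lo hi (s : seq (option (int * qbt R))) :
  wf_sub B h lo hi (QNode s) ->
  [/\ (B ^ h.+1 <= 4 * size (tpairs (QNode s)))%N, (0 < h)%N,
      sorted (fun a b : int => (a < b)%R) (rkeys s), all (in_rng lo hi) (rkeys s) &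
      all (fun c => wf_sub B h.-1 c.1.2 c.2 c.1.1) (child_ranges hi s)].
Proof.
move=> /= /and3P[H1 _ /and5P[H3 _ H5 H6 H7]]; split => //.
clear H1 H3 H5 H6.
elim: s H7 => [|[[r c]|] s IH] //=.
by move=> /andP[-> /IH].
Qed.

Lemma wf_sub_leaf {R} B h lo hi (s : seq (option (int * R))) :
  wf_sub B h lo hi (QLeaf s) -> h = 0 /\ all (fun p => in_rng lo hi p.1) (tpairs (QLeaf s)).
Proof.
move=> /= /and3P[_ _ /and3P[/eqP -> _ H]]; split => //.
elim: s H => [|[p|] s IH] //=.
  by move=> /andP[-> /IH].
Qed.

Lemma wf_sub_size {R} B h lo hi (t : qbt R) : wf_sub B h lo hi t -> B ^ h.+1 <= 4 * size (tpairs t).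
Proof. by case: t => s /and3P[]. Qed.

Lemma lo_le_trans lo (r k : int) : lo_le lo r -> (r <= k)%R -> lo_le lo k.
Proof. by case: lo => //= l; apply: le_trans. Qed.
Lemma lt_hi_trans hi (r k : int) : (k < r)%R -> lt_hi r hi -> lt_hi k hi.
Proof. by case: hi => //= h; apply: lt_trans. Qed.

Lemma cr_sub {R} lo hi (s : seq (option (int * qbt R))) k :
  all (in_rng lo hi) (rkeys s) ->
  all (fun c => in_rng c.1.2 c.2 k ==> in_rng lo hi k) (child_ranges hi s).
Proof.
elim: s => [|[[r c]|] s IH] //.
rewrite rkeys_some /= => /andP[Hr Hs]; rewrite IH // andbT /next_key.
case E: (rkeys s) Hs => [|r' rs] Hs; apply/implyP => /andP /= [Hrk Hk];
  move: Hr => /andP[Hlo Hhi]; rewrite /in_rng (lo_le_trans Hlo Hrk) /=.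
- exact Hk.
- move: Hs => /= /andP[/andP[_ Hr'] _]. exact: lt_hi_trans Hk Hr'.
Qed.

Definition contains {R} k (e : elt R) := in_rng e.1.2 e.2 k.

Lemma cr_count {R} hi (s : seq (option (int * qbt R))) k :
  sorted (fun a b : int => (a < b)%R) (rkeys s) -> all (fun r => lt_hi r hi) (rkeys s) ->
  (count (contains k) (child_ranges hi s) <= (if rkeys s is r :: _ then (r <= k)%R && lt_hi k hi else false))%N.
Proof.
elim: s => [|[[r c]|] s IH] //.
rewrite rkeys_some /= => Hs /andP[Hr Ha].
have IH' := IH (path_sorted Hs) Ha.
rewrite /contains /= /in_rng /= /next_key in IH' *.
case E: (rkeys s) Hs Ha IH' => [|r' rs] Hs Ha IH' /=.
  move: IH' => /= IH'. case: ((r <= k)%R); case: (lt_hi k hi) => /=; lia.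
have Hrr' : (r < r')%R by case/andP: Hs.
have Hr'h : lt_hi r' hi by case/andP: Ha.
case: (lerP r' k) IH' => Hk IH'.
- by rewrite andbF add0n (le_trans (ltW Hrr') Hk).
- rewrite (lt_hi_trans Hk Hr'h) andbT.
  move: IH'; rewrite /= leqn0 => /eqP ->; by rewrite addn0.
Qed.

Definition good {R} B h (e : elt R) : bool :=
  wf_sub B h e.1.2 e.2 e.1.1 || [&& e.1.2 == None, e.2 == None & wf_root B h e.1.1].

Lemma good_node {R} B h (e : elt R) s : good B h e -> e.1.1 = QNode s ->
  [/\ (0 < h)%N, sorted (fun a b : int => (a < b)%R) (rkeys s),
      all (in_rng e.1.2 e.2) (rkeys s) &
      all (fun c => wf_sub B h.-1 c.1.2 c.2 c.1.1) (child_ranges e.2 s)].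
Proof.
case: e => [[t lo] hi] He /= Et; subst t; move: He; rewrite /good /=; case/orP.
- by case/wf_sub_node.
- case/and3P => /eqP -> /eqP -> /= /and5P[H1 _ _ H4 H5]; split=> //.
  by apply/allP => r _.
Qed.

Lemma good_leaf {R} B h (e : elt R) s : good B h e -> e.1.1 = QLeaf s -> h = 0.
Proof.
case: e => [[t lo] hi] He /= Et; subst t; move: He; rewrite /good /=; case/orP.
- by case/wf_sub_leaf.
- by case/and3P => _ _ /= /andP[/eqP].
Qed.

Lemma wf_sub_height {R} B h lo hi (t : qbt R) : wf_sub B h lo hi t -> theight t <= h.
Proof.
elim: h lo hi t => [|h IH] lo hi [s|s] //.
- by case/wf_sub_node.
- case/wf_sub_node => _ _ _ _ H. apply: (theight_node (hi:=hi)).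
  apply: sub_all H => c /IH; by rewrite ltnS.
Qed.

Lemma good_height {R} B h (e : elt R) : good B h e -> theight e.1.1 <= h.
Proof.
move=> He; case E: e.1.1 => [s|s] //.
case: (good_node He E) => Hh _ _ H. apply: (theight_node (hi:=e.2)).
apply: sub_all H => c /wf_sub_height Hc. by rewrite (leq_ltn_trans Hc) // ltn_predL.
Qed.

Lemma all_flatten_cr {R} lo hi (cs : seq (elt R)) :
  all (fun c => all (fun p => in_rng c.1.2 c.2 p.1) (tpairs c.1.1)) cs ->
  (forall k, all (fun c => in_rng c.1.2 c.2 k ==> in_rng lo hi k) cs) ->
  all (fun p => in_rng lo hi p.1) (flatten [seq tpairs c.1.1 | c <- cs]).
Proof.
elim: cs => [|c cs IH] //= /andP[H1 H2] Hk.
rewrite all_cat IH ?andbT //; last by move=> k; case/andP: (Hk k).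
apply: sub_all H1 => p Hp. by have /andP[/implyP H _] := Hk p.1; apply: H.
Qed.

Lemma wf_sub_range {R} B h lo hi (t : qbt R) : wf_sub B h lo hi t ->
  all (fun p => in_rng lo hi p.1) (tpairs t).
Proof.
elim: h lo hi t => [|h IH] lo hi [s|s].
- by case/wf_sub_leaf.
- by case/wf_sub_node.
- by case/wf_sub_leaf.
- case/wf_sub_node => _ _ _ Hk H. rewrite (tpairs_node hi). apply: all_flatten_cr.
  + apply: sub_all H => c /IH. done.
  + move=> k; exact: cr_sub.
Qed.

Lemma inside_q (x y : int) lo hi k : inside x y lo hi -> in_rng lo hi k -> (x <= k)%R && (k <= y)%R.
Proof. rewrite /inside /in_rng; case: lo hi => [l|] [h|] //= /andP[H1 H2] /andP[H3 H4] /=; apply/andP; split; lia. Qed.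

Lemma outside_q (x y : int) lo hi k : outside x y lo hi -> in_rng lo hi k -> ~~ ((x <= k)%R && (k <= y)%R).
Proof.
move=> H Hk; apply/negP => /andP[H5 H6]; move: H Hk; rewrite /outside /in_rng;
case: lo hi => [l|] [h|] /=; rewrite ?andbT ?orbF ?orFb ?andTb; lia.
Qed.

Definition partial {R} x y (e : elt R) := ~~ outside x y e.1.2 e.2 && ~~ inside x y e.1.2 e.2.

Lemma partial_contains {R} x y (e : elt R) : partial x y e -> contains x e || contains y e.
Proof.
rewrite /partial /contains /in_rng; case: e => [[t [l|]] [h|]] /=; rewrite ?negb_or ?negb_and -?ltNge -?leNgt;
  try lia.
Qed.

Definition ans {R} x y (L : seq (elt R)) := flatten [seq filter (in_query x y) (tpairs e.1.1) | e <- L].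
Definition wt {R} B (L : seq (elt R)) := sumn [seq B ^ (theight e.1.1).+1 | e <- L].

Lemma children_good {R} x y B h (e : elt R) : good B h e -> all (good B h.-1) (children x y e).
Proof.
move=> He; rewrite /children; case E: e.1.1 => [s|s] //.
case: (good_node He E) => _ _ _ H. apply: all_filterW. apply: sub_all H => c Hc.
by rewrite /good Hc.
Qed.

Lemma children_partial {R} x y (e : elt R) : ~~ precise x y e -> all (partial x y) (children x y e).
Proof.
rewrite /precise /children; case: e.1.1 => [s|s] // Hn.
rewrite all_filter. rewrite -all_predC in Hn. apply: sub_all Hn => c /= Hc.
by apply/implyP => Ho; rewrite /partial Ho.
Qed.

Lemma children_count {R} x y B h k (e : elt R) : good B h e ->
  (count (contains k) (children x y e) <= contains k e)%N.
Proof.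
move=> He; rewrite /children; case E: e.1.1 => [s|s] //.
case: (good_node He E) => _ Hs Hr _.
rewrite count_filter; apply: leq_trans (sub_count (a2 := contains k) _ _) _.
  by move=> c /andP[].
have Hlt : all (fun r => lt_hi r e.2) (rkeys s) by apply: sub_all Hr => r /andP[].
apply: leq_trans (cr_count k Hs Hlt) _.
case E2: (rkeys s) Hr => [|r rs] //= /andP[/andP[Hl _] _].
case/boolP: ((r <= k)%R && lt_hi k e.2) => //= /andP[Hrk Hk].
by rewrite /contains /in_rng (lo_le_trans Hl Hrk) Hk.
Qed.

Lemma good0_precise {R} x y B (e : elt R) : good B 0 e -> precise x y e.
Proof.
move=> He; rewrite /precise; case E: e.1.1 => [s|s] //.
by case: (good_node He E).
Qed.

Lemma children_ans {R} x y B h (e : elt R) : good B h e -> ~~ precise x y e ->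
  filter (in_query x y) (tpairs e.1.1) = ans x y (children x y e).
Proof.
move=> He; rewrite /precise /children /ans; case E: e.1.1 => [s|s] //.
case: (good_node He E) => _ _ _ H _.
rewrite (tpairs_node e.2). elim: (child_ranges e.2 s) H => [|c cs IH] //= /andP[Hc Hcs].
rewrite filter_cat IH //. case: ifP => Ho //=.
rewrite (@filter_nil_all _ _ (fun p => in_rng c.1.2 c.2 p.1)) //.
  exact: wf_sub_range Hc.
move=> p Hp. apply: outside_q Hp. exact: negbFE Ho.
Qed.

Lemma inside_bound {R} x y B m (cs : seq (elt R)) :
  all (fun c => wf_sub B m c.1.2 c.2 c.1.1) cs -> has (fun c => inside x y c.1.2 c.2) cs ->
  B ^ m.+1 <= 4 * count (in_query x y) (flatten [seq tpairs c.1.1 | c <- cs]).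
Proof.
elim: cs => [|c cs IH] //= /andP[Hc Hcs] /orP[Hi|Hh]; rewrite count_cat mulnDr.
- apply: leq_trans (leq_addr _ _). apply: leq_trans (wf_sub_size Hc) _.
  suff -> : count (in_query x y) (tpairs c.1.1) = size (tpairs c.1.1) by [].
  apply/eqP; rewrite -all_count. apply: sub_all (wf_sub_range Hc) => p. exact: inside_q Hi.
- apply: leq_trans (leq_addl _ _). exact: IH.
Qed.

Lemma precise_bound {R} x y B h (e : elt R) : good B h e -> precise x y e ->
  (h = 0) \/ (B ^ h.+1 <= 4 * B * count (in_query x y) (tpairs e.1.1))%N.
Proof.
move=> He; rewrite /precise; case E: e.1.1 => [s|s] Hp.
  by left; apply: good_leaf He E.
right; case: (good_node He E) => Hh _ _ H.
have := inside_bound H Hp. rewrite prednK // -(tpairs_node e.2) => Hb.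
by rewrite expnS -mulnA mulnCA leq_mul2l Hb orbT.
Qed.


Lemma ans_cat {R} x y (L1 L2 : seq (elt R)) : ans x y (L1 ++ L2) = ans x y L1 ++ ans x y L2.
Proof. by rewrite /ans map_cat flatten_cat. Qed.
Lemma size_ans_cons {R} x y (e : elt R) L :
  size (ans x y (e :: L)) = count (in_query x y) (tpairs e.1.1) + size (ans x y L).
Proof. by rewrite /ans /= size_cat size_filter. Qed.

Lemma list_children_good {R} x y B h (L : seq (elt R)) :
  all (good B h) L -> all (good B h.-1) (flatten (map (children x y) L)).
Proof. elim: L => //= e L IH /andP[He HL]; by rewrite all_cat (children_good x y He) IH. Qed.

Lemma list_children_partial {R} x y (L : seq (elt R)) :
  ~~ has (precise x y) L -> all (partial x y) (flatten (map (children x y) L)).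
Proof. elim: L => //= e L IH; rewrite negb_or => /andP[He HL]; by rewrite all_cat children_partial // IH. Qed.

Lemma list_children_count {R} x y B h k (L : seq (elt R)) : all (good B h) L ->
  (count (contains k) (flatten (map (children x y) L)) <= count (contains k) L)%N.
Proof.
elim: L => //= e L IH /andP[He HL]; rewrite count_cat; apply: leq_add; [exact: children_count He | exact: IH].
Qed.

Lemma list_children_ans {R} x y B h (L : seq (elt R)) : all (good B h) L -> ~~ has (precise x y) L ->
  ans x y (flatten (map (children x y) L)) = ans x y L.
Proof.
elim: L => //= e L IH /andP[He HL]; rewrite negb_or => /andP[Hp Hn].
rewrite ans_cat IH // -(children_ans He Hp). by [].
Qed.

Lemma size_partial {R} x y (L : seq (elt R)) : all (partial x y) L ->
  (forall k, count (contains k) L <= 1) -> size L <= 2.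
Proof.
move=> Hp Hc. have := count_predUI (contains x) (contains y) L.
have -> : count (predU (contains x) (contains y)) L = size L.
  apply/eqP; rewrite -all_count; apply: sub_all Hp => e /partial_contains //.
have := Hc x; have := Hc y. lia.
Qed.

Lemma gsearch_ans {R} x y B n h (L : seq (elt R)) : all (good B h) L -> ans x y (gsearch x y n L).1 = ans x y L.
Proof.
elim: n h L => [|n IH] h L HL /=; case: ifP => Hp //=.
by rewrite (IH h.-1) ?list_children_good // (list_children_ans HL (negbT Hp)).
Qed.

Lemma prec_list_bound {R} x y B n (L : seq (elt R)) : all (good B n) L -> has (precise x y) L ->
  n = 0 \/ (B ^ n.+1 <= 4 * B * size (ans x y L))%N.
Proof.
elim: L => //= e L IH /andP[He HL] /orP[Hp|Hh].
- case: (precise_bound He Hp) => [->|H]; [by left | right].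
  rewrite size_ans_cons; apply: leq_trans H _; by rewrite leq_mul2l leq_addr orbT.
- case: (IH HL Hh) => [->|H]; [by left | right].
  rewrite size_ans_cons; apply: leq_trans H _; by rewrite leq_mul2l leq_addl orbT.
Qed.

Lemma wt_le {R} B n (L : seq (elt R)) : 0 < B -> all (fun e => theight e.1.1 <= n) L ->
  wt B L <= size L * B ^ n.+1.
Proof.
move=> HB; elim: L => //= e L IH /andP[He HL]; rewrite mulSn leq_add //; last exact: IH.
by rewrite leq_pexp2l // ltnS.
Qed.

Lemma gsearch_cost {R} x y B n (L : seq (elt R)) : 0 < B -> all (good B n) L -> all (partial x y) L ->
  (forall k, count (contains k) L <= 1) ->
  [/\ (gsearch x y n L).2 <= 2 * n.+1, size (gsearch x y n L).1 <= 2,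
      all (fun e => theight e.1.1 <= n) (gsearch x y n L).1 &
      wt B (gsearch x y n L).1 <= 2 * B + 8 * B * size (ans x y (gsearch x y n L).1)].
Proof.
move=> HB; elim: n L => [|n IH] L HL Hp Hc; have HS := size_partial Hp Hc.
- have Hh : all (fun e => theight e.1.1 <= 0) L by apply: sub_all HL => e /good_height.
  have Hw := wt_le HB Hh.
  rewrite /=; case: ifP => Hpr /=; split => //; try lia;
  (apply: leq_trans Hw _; apply: leq_trans _ (leq_addr _ _); by rewrite expn1 leq_mul2r HS orbT).
- have Hh : all (fun e => theight e.1.1 <= n.+1) L by apply: sub_all HL => e /good_height.
  rewrite /=; case: ifP => Hpr /=.
  + have Hw := wt_le HB Hh. split => //; first lia.
    case: (prec_list_bound HL Hpr) => // Hb.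
    apply: leq_trans Hw _; apply: leq_trans _ (leq_addl _ _).
    have := leq_mul HS Hb. nia.
  + have [H1 H2 H3 H4] := IH (flatten (map (children x y) L)) (list_children_good x y HL)
       (list_children_partial (negbT Hpr)) (fun k => leq_trans (list_children_count x y k HL) (Hc k)).
    split => //; first lia.
    apply: sub_all H3 => e /= He; exact: leqW.
Qed.

Definition Pr {R} x y B Lm (r : seq (elt R) * nat) : bool :=
  [&& r.2 <= 2 * Lm, size r.1 <= 2, all (fun e => theight e.1.1 < Lm) r.1 &
      wt B r.1 <= 2 * B + 8 * B * size (ans x y r.1)].

Lemma root_good {R} B i (t : qbt R) : wf_root B i t -> good B i (t, None, None).
Proof. by move=> H; rewrite /good /= H orbT. Qed.

Lemma tree_ok {R} x y B i Lm (t : qbt R) : 0 < B -> i < Lm -> wf_root B i t ->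
  Pr x y B Lm (gsearch x y i [:: (t, None, None)]).
Proof.
move=> HB Hi Ht.
have [] := @gsearch_cost R x y B i [:: (t, None, None)] HB.
- by rewrite /= root_good.
- by [].
- by move=> k.
move=> H1 H2 H3 H4; apply/and4P; split => //.
- lia.
- apply: sub_all H3 => e He; exact: leq_ltn_trans He Hi.
Qed.

Lemma tree_ans {R} x y B i (t : qbt R) : wf_root B i t ->
  ans x y (gsearch x y i [:: (t, None, None)]).1 = filter (in_query x y) (tpairs t).
Proof.
move=> Ht; rewrite (@gsearch_ans R x y B i i) /=; first by rewrite /ans /= cats0.
by rewrite root_good.
Qed.

Lemma wt_cat {R} B (L1 L2 : seq (elt R)) : wt B (L1 ++ L2) = wt B L1 + wt B L2.
Proof. by rewrite /wt map_cat sumn_cat. Qed.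

Lemma agg {R} x y B Lm (S : seq (seq (elt R) * nat)) : all (Pr x y B Lm) S ->
  [/\ sumn (map snd S) <= size S * (2 * Lm),
      size (flatten (map fst S)) <= size S * 2,
      all (fun e => theight e.1.1 < Lm) (flatten (map fst S)) &
      wt B (flatten (map fst S)) <= size S * (2 * B) + 8 * B * size (ans x y (flatten (map fst S)))].
Proof.
elim: S => [|r S IH] //= /andP[/and4P[H1 H2 H3 H4] /IH [I1 I2 I3 I4]].
rewrite size_cat all_cat H3 I3 wt_cat ans_cat size_cat; split => //; nia.
Qed.

Lemma max_lt {R} Lm (cs : seq (elt R)) : 0 < Lm -> all (fun c => theight c.1.1 < Lm) cs ->
  (\max_(c <- cs) theight c.1.1) < Lm.
Proof.
move=> HL; elim: cs => [|c cs IH]; rewrite ?big_nil ?big_cons //= => /andP[H1 H2].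
by rewrite gtn_max H1 IH.
Qed.

Lemma size_searches {R} x y B (F : seq (seq (qbt R))) ix :
  all (fun i => size (nth [::] F i) <= B.-1) ix ->
  size (flatten [seq [seq gsearch x y i [:: (t, None, None)] | t <- nth [::] F i] | i <- ix]) <= size ix * B.
Proof.
elim: ix => [|i ix IH] //= /andP[H1 H2]; rewrite size_cat size_map mulSn leq_add //; last exact: IH.
apply: leq_trans H1 _; exact: leq_pred.
Qed.

Lemma ans_searches {R} x y B (F : seq (seq (qbt R))) ix :
  all (fun i => all (wf_root B i) (nth [::] F i)) ix ->
  ans x y (flatten (map fst (flatten [seq [seq gsearch x y i [:: (t, None, None)] | t <- nth [::] F i] | i <- ix])))
  = filter (in_query x y) (flatten [seq flatten (map tpairs (nth [::] F i)) | i <- ix]).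
Proof.
elim: ix => [|i ix IH] //= /andP[H1 H2].
rewrite map_cat flatten_cat ans_cat filter_cat IH //; congr (_ ++ _).
elim: (nth [::] F i) H1 => [|t ts IHt] //= /andP[Ht Hts].
by rewrite ans_cat (tree_ans x y Ht) filter_cat IHt.
Qed.

Theorem theorem5p2 (B : nat) (HB4 : (4 <= B)%N) (HB2 : exists e : nat, B = (2 ^ e)%N) :
  exists C : rat, (0 <= C)%R /\
  forall (Rec : Type) (N : nat) (F : seq (seq (qbt Rec))) (x y : int),
    dqbt_wf B N F -> (x <= y)%R ->
    (0 < count (in_query x y) (dataset F))%N ->
    Permutation (answer x y F) (filter (in_query x y) (dataset F)) /\
    (expected_time B x y F <= C * ((trunc_log B N).+1)%:R ^+ 2)%R.
Proof.
have HB : 0 < B by lia.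
pose lg := trunc_log 2 B.
pose c1 := 2 * B + lg + 2.
pose D := 2 * B * B + 8 * B.
exists ((2 * B + c1 * D)%:R)%R; split; first by apply: ler0n.
move=> Rec N F x y /and3P[/eqP HF _ Hall] Hxy Hpos.
rewrite -HF.
have HL : 0 < size F by rewrite HF.
have Hans : answer x y F = filter (in_query x y) (dataset F).
  rewrite /answer /candidates /searches.
  rewrite -/(ans x y _) (@ans_searches Rec x y B F (iota 0 (size F))).
    rewrite /dataset; congr filter.
    by rewrite -[in RHS](mkseq_nth [::] F) /mkseq -map_comp.
  apply/allP => i Hi; by case/andP: (allP Hall i Hi).
split; first by rewrite Hans; apply: Permutation_refl.
have HP : all (Pr x y B (size F)) (searches x y F).
  rewrite /searches all_flatten' all_map; apply/allP => i Hi /=.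
  have /andP[_ Hw] := allP Hall i Hi.
  move: Hi; rewrite mem_iota add0n => /andP[_ Hi].
  rewrite all_map. apply: sub_all Hw => t Ht /=. exact: tree_ok.
have HS : size (searches x y F) <= size F * B.
  have := @size_searches Rec x y B F (iota 0 (size F)).
  rewrite size_iota; apply.
  apply/allP => i Hi; by case/andP: (allP Hall i Hi).
have [A1 A2 A3 A4] := agg HP.
set S := searches x y F in HS A1 A2 A3 A4.
set A := size (answer x y F).
have HA : 0 < A by rewrite /A Hans size_filter.
have Hsc : search_cost x y F <= 2 * B * (size F) ^ 2.
  rewrite /search_cost -/S. apply: leq_trans A1 _.
  have := leq_mul HS (leqnn (2 * size F)). nia.
have Hmax := max_lt HL A3.
have Htc : trial_cost B x y F <= size F * c1.
  have Ecand : candidates x y F = flatten (map fst S) by [].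
  rewrite /trial_cost Ecand.
  have Hc : size (flatten (map fst S)) <= size F * B * 2.
    apply: leq_trans A2 _. by rewrite leq_mul2r HS orbT.
  have := leq_mul Hmax (leqnn (trunc_log 2 B + 1)).
  rewrite /c1 /lg. nia.
have Hpw : prep_weight B x y F <= D * size F * A.
  have -> : prep_weight B x y F = wt B (flatten (map fst S)) by [].
  apply: leq_trans A4 _.
  have h1 := leq_mul HS (leqnn (2 * B)).
  have h2 : size F * B * (2 * B) <= size F * B * (2 * B) * A by rewrite leq_pmulr.
  have h3 : 8 * B * A <= 8 * B * A * size F by rewrite leq_pmulr.
  have h4 : size (ans x y (flatten [seq i.1 | i <- S])) = A by [].
  rewrite h4 /D. nia.
have Hprod : trial_cost B x y F * prep_weight B x y F <= c1 * D * size F ^ 2 * A.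
  apply: leq_trans (leq_mul Htc Hpw) _. nia.
rewrite /expected_time -/A.
have HAr : (0 < A%:R :> rat)%R by rewrite ltr0n.
have H2 : ((trial_cost B x y F)%:R * (prep_weight B x y F)%:R / A%:R <= (c1 * D * size F ^ 2)%:R :> rat)%R.
  by rewrite ler_pdivrMr // -!natrM ler_nat.
have H1 : ((search_cost x y F)%:R <= (2 * B * size F ^ 2)%:R :> rat)%R by rewrite ler_nat.
apply: le_trans (lerD H1 H2) _.
by rewrite -natrD -natrX -natrM ler_nat mulnDl.
Qed.
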